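(* Let $\frac14\le a\le b$. For any $t\ge\frac1{10}$, \[ \mathcal{R}_I(t,a,b) = O\!\left(\frac{\sqrt b}{t}\right). \]
   Context: Write $a = \frac14+\alpha^2$, $b=\frac14+\beta^2$ with $0\le\alpha\le\beta$. For $t>0$ and $r\in\mathbb{C}$, $h_t(r) = \frac{t}{\sqrt\pi}\int_\alpha^\beta\exp(-t^2(r-\rho)^2)\,d\rho$, and \[ \mathcal{R}_I(t,a,b) = \frac{1}{4\pi}\int_0^{+\infty}\big(h_t(r)+h_t(-r) - \mathbf{1}_{[\alpha,\beta]}(r)\big)\,r\tanh(\pi r)\,dr. \] $T_1=O(T_2)$ means $|T_1|\le CT_2$ with a universal constant $C$ independent of $a,b,t$. *)

(* Defs.v *)
From Stdlib Require Import Reals.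
From Coquelicot Require Import Coquelicot.
Open Scope R_scope.

Definition tanhR (x : R) : R := (exp x - exp (- x)) / (exp x + exp (- x)).

(* a = 1/4 + alpha^2, alpha >= 0 *)
Definition spec_param (a : R) : R := sqrt (a - / 4).

Definition h_t (t alpha beta r : R) : R :=
  t / sqrt PI * RInt (fun rho => exp (- (t ^ 2 * (r - rho) ^ 2))) alpha beta.

Definition ind_cc (alpha beta r : R) : R :=
  if Rle_dec alpha r then (if Rle_dec r beta then 1 else 0) else 0.

Definition RI_integrand (t a b : R) (r : R) : R :=
  let alpha := spec_param a in let beta := spec_param b in
  (h_t t alpha beta r + h_t t alpha beta (- r) - ind_cc alpha beta r)
    * r * tanhR (PI * r).

Definition R_I (t a b : R) : R :=
  / (4 * PI) * RInt_gen (RI_integrand t a b) (at_point 0) (Rbar_locally p_infty).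

(* Main.v *)
Require Import Defs.
From Stdlib Require Import Reals Lra Psatz.
From Coquelicot Require Import Coquelicot.
Open Scope R_scope.
Lemma RInt_scalR (f:R->R) (a b l : R) : ex_RInt f a b -> @eq R (RInt (fun x => l * f x) a b) (l * RInt f a b).
Proof. intros H. exact (RInt_scal (V:=R_CompleteNormedModule) f a b l H). Qed.
Lemma RInt_comp_linR (f:R->R) u v a b : ex_RInt f (u*a+v) (u*b+v) -> @eq R (RInt (fun y => u * f (u*y+v)) a b) (RInt f (u*a+v) (u*b+v)).
Proof. intros H. exact (RInt_comp_lin (V:=R_CompleteNormedModule) f u v a b H). Qed.
Lemma RInt_ChaslesR (f:R->R) a b c : ex_RInt f a b -> ex_RInt f b c -> @eq R (RInt f a b + RInt f b c) (RInt f a c).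
Proof. intros H1 H2. exact (RInt_Chasles (V:=R_CompleteNormedModule) f a b c H1 H2). Qed.
Lemma RInt_constR (a b c : R) : @eq R (RInt (fun _ => c) a b) ((b - a) * c).
Proof. exact (RInt_const (V:=R_CompleteNormedModule) a b c). Qed.
Lemma RInt_pointR (f:R->R) a : @eq R (RInt f a a) 0.
Proof. exact (RInt_point (V:=R_CompleteNormedModule) a f). Qed.
Lemma RInt_extR (f g:R->R) a b : (forall x, Rmin a b < x < Rmax a b -> f x = g x) -> @eq R (RInt f a b) (RInt g a b).
Proof. intros H. exact (RInt_ext (V:=R_CompleteNormedModule) f g a b H). Qed.
Lemma is_RInt_uniqueR (f:R->R) (a b l : R) : is_RInt f a b l -> @eq R (RInt f a b) l.
Proof. intros H. exact (is_RInt_unique (V:=R_CompleteNormedModule) f a b l H). Qed.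
Lemma RInt_oppR (f:R->R) a b : ex_RInt f a b -> @eq R (RInt (fun x => - f x) a b) (- RInt f a b).
Proof. intros H. exact (RInt_opp (V:=R_CompleteNormedModule) f a b H). Qed.
Lemma RInt_swapR (f:R->R) a b : ex_RInt f a b -> @eq R (- RInt f a b) (RInt f b a).
Proof. intros H. exact (opp_RInt_swap (V:=R_CompleteNormedModule) f a b H). Qed.
Lemma is_RInt_derR (f df:R->R) a b : (forall x, Rmin a b <= x <= Rmax a b -> is_derive f x (df x)) ->
  (forall x, Rmin a b <= x <= Rmax a b -> continuous df x) -> is_RInt df a b (f b - f a).
Proof. intros H1 H2. exact (is_RInt_derive (V:=R_CompleteNormedModule) f df a b H1 H2). Qed.
Lemma exd_cont (f:R->R) x : ex_derive f x -> continuous f x.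
Proof. intros H. exact (ex_derive_continuous f x H). Qed.
Lemma exR_cont (f:R->R) a b : (forall z, Rmin a b <= z <= Rmax a b -> continuous f z) -> ex_RInt f a b.
Proof. intros H. exact (ex_RInt_continuous (V:=R_CompleteNormedModule) f a b H). Qed.
Lemma exp_le1 y : y <= 0 -> exp y <= 1.
Proof. intros. destruct (Req_dec y 0). subst; rewrite exp_0; lra. left; rewrite <- exp_0; apply exp_increasing; lra. Qed.

Definition E (u:R) := exp (- (u^2)).
Lemma E_cont x : continuous E x.
Proof. apply exd_cont; unfold E; auto_derive; auto. Qed.
Lemma E_ex a b : ex_RInt E a b.
Proof. apply exR_cont; intros; apply E_cont. Qed.
Definition A (x:R) : R := RInt E 0 x.
Lemma A_der (x:R) : is_derive A x (E x).
Proof.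
  apply is_derive_RInt with 0. apply filter_forall; intros; unfold A; exact (RInt_correct (V:=R_CompleteNormedModule) _ _ _ (E_ex _ _)).
  apply E_cont.
Qed.
Definition gi (x s : R) := exp (- (x^2 * (1 + s^2))) / (1 + s^2).
Definition Gf (x:R) : R := RInt (fun s => gi x s) 0 1.

Lemma gi_der (x s : R) : is_derive (fun u => gi u s) x (-2 * x * exp (- (x^2 * (1 + s^2)))).
Proof. unfold gi. auto_derive. nra. replace (x * (x * 1) * (1 + s * (s * 1))) with (x ^ 2 * (1 + s ^ 2)) by ring. field. nra. Qed.

Lemma Gf_der (x:R) : is_derive Gf x (-2 * exp (- x^2) * A x).
Proof.
  assert (H := is_derive_RInt_param gi 0 1 x).
  unfold Gf.
  replace (-2 * exp (- x^2) * A x) with (RInt (fun t : R => Derive (fun u : R => gi u t) x) 0 1).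
  apply H.
  - apply filter_forall; intros; eexists; apply gi_der.
  - intros t _. apply continuity_2d_pt_ext with (fun u v => -2 * u * exp (- (u^2 * (1 + v^2)))).
    intros; symmetry; apply is_derive_unique, gi_der.
    apply continuity_2d_pt_mult. apply continuity_2d_pt_mult. apply continuity_2d_pt_const. apply continuity_2d_pt_id1.
    apply continuity_1d_2d_pt_comp with (f := exp) (g := fun u v => - (u^2 * (1 + v^2))).
    apply derivable_continuous_pt, derivable_pt_exp.
    apply continuity_2d_pt_opp. apply continuity_2d_pt_mult.
    apply continuity_2d_pt_mult. apply continuity_2d_pt_id1. apply continuity_2d_pt_mult. apply continuity_2d_pt_id1. apply continuity_2d_pt_const.
    apply continuity_2d_pt_plus. apply continuity_2d_pt_const.
    apply continuity_2d_pt_mult. apply continuity_2d_pt_id2. apply continuity_2d_pt_mult. apply continuity_2d_pt_id2. apply continuity_2d_pt_const.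
  - apply filter_forall; intros. apply exR_cont; intros.
    apply exd_cont; unfold gi; auto_derive; nra.
  - rewrite (RInt_extR _ (fun s => (-2 * exp (- x^2)) * (x * (E (x * s + 0))))).
    rewrite RInt_scalR. rewrite RInt_comp_linR. unfold A. replace (x*0+0) with 0 by ring. replace (x*1+0) with x by ring. reflexivity.
    replace (x*0+0) with 0 by ring. replace (x*1+0) with x by ring. apply E_ex.
    apply (ex_RInt_comp_lin (V:=R_CompleteNormedModule)). apply E_ex.
    intros s _. transitivity (-2 * x * exp (- (x^2 * (1 + s^2)))). apply is_derive_unique, gi_der. unfold E.
    replace (- (x ^ 2 * (1 + s ^ 2))) with (- x^2 + - ((x*s+0)^2)) by ring. rewrite exp_plus. ring.
Qed.

Definition Hf x := A x * A x + Gf x.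
Lemma Hf_der (x:R) : is_derive Hf x 0.
Proof.
  unfold Hf.
  assert (D := is_derive_plus _ _ _ _ _ (is_derive_mult _ _ _ _ _ (A_der x) (A_der x) Rmult_comm) (Gf_der x)).
  replace 0 with (plus (plus (mult (E x) (A x)) (mult (A x) (E x))) (-2 * exp (- x ^ 2) * A x)).
  exact D.
  unfold plus, mult, E; simpl; ring.
Qed.
Lemma Hf_cont x : continuity_pt Hf x.
Proof. apply continuity_pt_filterlim. apply exd_cont. eexists; apply Hf_der. Qed.
Lemma Hf_0 : Hf 0 = PI / 4.
Proof.
  unfold Hf, A, Gf. rewrite RInt_pointR.
  rewrite (RInt_extR _ (fun s => / (1 + s^2))).
  rewrite (is_RInt_uniqueR _ _ _ (atan 1 - atan 0)). rewrite atan_1, atan_0. ring.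
  apply is_RInt_derR. intros. replace (/ (1 + x^2)) with (/ (1 + x²)) by (unfold Rsqr; f_equal; ring). apply is_derive_atan.
  intros. apply exd_cont. auto_derive. nra.
  intros. unfold gi. replace (- (0 ^ 2 * (1 + x ^ 2))) with 0 by ring. rewrite exp_0. field. nra.
Qed.
Lemma Hf_const x : Hf x = PI / 4.
Proof.
  rewrite <- Hf_0.
  destruct (MVT_gen Hf 0 x (fun _ => 0)) as [c [_ Hc]].
  intros; apply Hf_der. intros; apply Hf_cont. lra.
Qed.
Lemma Gf_bounds x : 0 <= Gf x <= exp (- x^2).
Proof.
  assert (Ex : ex_RInt (gi x) 0 1). apply exR_cont; intros; apply exd_cont; unfold gi; auto_derive; nra.
  split.
  apply RInt_ge_0. lra. exact Ex. intros; unfold gi. apply Rmult_le_pos. apply Rlt_le, exp_pos. apply Rlt_le, Rinv_0_lt_compat. nra.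
  assert (Ec : RInt (fun _ => exp (- x^2)) 0 1 = exp (- x^2)).
  rewrite RInt_constR. match goal with |- ?a = ?b => change (@eq R a b) end. ring.
  rewrite <- Ec. unfold Gf.
  apply RInt_le. lra. exact Ex. apply exR_cont; intros; apply continuous_const.
  intros s Hs. unfold gi.
  replace (- (x ^ 2 * (1 + s ^ 2))) with (- x^2 + - ((x*s)^2)) by ring. rewrite exp_plus.
  assert (exp (- (x*s)^2) <= 1) by (apply exp_le1; nra).
  assert (0 < exp (- x^2)) by apply exp_pos.
  apply Rmult_le_reg_r with (1 + s^2). nra. unfold Rdiv. rewrite Rmult_assoc, Rinv_l by nra. nra.
Qed.
Lemma A_sq x : PI / 4 - exp (- x^2) <= A x * A x <= PI / 4.
Proof. assert (H := Hf_const x). unfold Hf in H. assert (H2 := Gf_bounds x). lra. Qed.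
Lemma A_nonneg x : 0 <= x -> 0 <= A x.
Proof. intros. apply RInt_ge_0. auto. apply E_ex. intros; apply Rlt_le, exp_pos. Qed.
Definition sPI := sqrt PI.
Lemma sPI_facts : 1 <= sPI /\ sPI * sPI = PI /\ 2 < PI.
Proof.
  assert (H := PI2_1). unfold sPI. split. rewrite <- sqrt_1. apply sqrt_le_1_alt. lra.
  split. apply sqrt_sqrt. lra. lra.
Qed.
Lemma A_le x : 0 <= x -> A x <= sPI / 2.
Proof. intros. destruct sPI_facts as (?&?&?). assert (H3 := A_sq x). assert (H4 := A_nonneg x H).
  destruct (Rle_dec (A x) (sPI/2)); auto. nra. Qed.
Lemma A_low y : 0 <= y -> sPI / 2 - A y <= 2 * exp (- y^2) / sPI.
Proof. intros. destruct sPI_facts as (?&?&?). assert (H3 := A_sq y). assert (H4 := A_nonneg y H).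
  assert (H5 := A_le y H).
  apply Rmult_le_reg_r with sPI. lra. unfold Rdiv. rewrite Rmult_assoc, Rinv_l by lra. nra. Qed.
Lemma E_bound u : 0 <= u -> E u <= 12 / (1 + u)^4.
Proof. intros. unfold E. rewrite exp_Ropp.
  assert (H1 : exp (u^2) = exp (u^2/2) * exp (u^2/2)) by (rewrite <- exp_plus; f_equal; field).
  assert (H2 := exp_ineq1_le (u^2/2)).
  assert (H3 : (1+u)^4 <= 12 * exp (u^2)). rewrite H1. assert (0 <= u^2) by nra.
  assert (exp (u^2/2) * exp (u^2/2) >= (1+u^2/2)*(1+u^2/2)) by (apply Rle_ge, Rmult_le_compat; lra).
  assert (0 <= (u*(u-1))^2) by apply pow2_ge_0. assert (0 <= (2*u-1)^2) by apply pow2_ge_0. nra.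
  assert (0 < exp (u^2)) by apply exp_pos. assert (0 < (1+u)^4) by (apply pow_lt; lra).
  apply Rmult_le_reg_r with (exp (u^2) * (1+u)^4). nra. field_simplify; try lra.
Qed.


Lemma A_diff x y : 0 <= x <= y -> A y - A x <= 4 / (1 + x)^3.
Proof.
  intros [Hx Hy].
  assert (Hc : A y - A x = RInt E x y).
  { unfold A. rewrite <- (RInt_ChaslesR E 0 x y) by apply E_ex. ring. }
  rewrite Hc.
  assert (HI : RInt (fun u => 12 / (1 + u)^4) x y = (- 4 / (1+y)^3) - (- 4 / (1+x)^3)).
  { apply is_RInt_uniqueR. apply (is_RInt_derR (fun u => - 4 / (1+u)^3)).
    intros u Hu. rewrite Rmin_left, Rmax_right in Hu by lra. auto_derive. assert (0 < (1+u)^4) by (apply pow_lt; lra). nra. field. lra.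
    intros u Hu. rewrite Rmin_left, Rmax_right in Hu by lra. apply exd_cont. auto_derive. assert (0 < (1+u)^4) by (apply pow_lt; lra). nra. }
  apply Rle_trans with (RInt (fun u => 12 / (1 + u)^4) x y).
  apply RInt_le. auto. apply E_ex. 
  apply exR_cont. intros u Hu. rewrite Rmin_left, Rmax_right in Hu by lra. apply exd_cont. auto_derive. assert (0 < (1+u)^4) by (apply pow_lt; lra). nra.
  intros; apply E_bound; lra.
  rewrite HI. assert (0 < (1+y)^3) by (apply pow_lt; lra). assert (0 < 4 / (1+y)^3) by (apply Rdiv_lt_0_compat; lra). lra.
Qed.

Definition Fn y := A y / sPI.
Lemma Fn_tail x : 0 <= x -> 0 <= 1/2 - Fn x <= 4 / (1 + x)^3.
Proof.
  intros Hx. destruct sPI_facts as (H1&H2&H3). unfold Fn. split.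
  assert (H := A_le x Hx). replace (1/2 - A x / sPI) with ((sPI/2 - A x) * / sPI) by (field; lra). apply Rmult_le_pos. lra. left; apply Rinv_0_lt_compat; lra.
  apply Rle_plus_epsilon. intros eps Heps.
  set (y := x + 2 / eps + 1).
  assert (Hy : x <= y). unfold y. assert (0 < 2/eps) by (apply Rdiv_lt_0_compat; lra). lra.
  assert (Ha := A_low y ltac:(lra)). assert (Hb := A_diff x y ltac:(lra)).
  assert (He : exp (- y^2) <= eps / 2).
  { rewrite exp_Ropp. assert (H4 := exp_ineq1_le (y^2)). assert (0 < 2/eps) by (apply Rdiv_lt_0_compat; lra).
    assert (y * eps >= 2). unfold y. replace ((x + 2 / eps + 1) * eps) with (x*eps + 2 + eps) by (field; lra). nra.
    apply Rmult_le_reg_r with (exp (y^2)). apply exp_pos. rewrite Rinv_l by (apply Rgt_not_eq, exp_pos). nra. }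
  assert (0 < (1+x)^3) by (apply pow_lt; lra).
  assert (H5 : 4 / (1+x)^3 * / sPI <= 4 / (1+x)^3).
  { assert (0 < 4 / (1+x)^3) by (apply Rdiv_lt_0_compat; lra). 
    assert (/ sPI <= 1). rewrite <- Rinv_1. apply Rinv_le_contravar; lra. nra. }
  assert (H6 : 2 * exp (- y^2) / sPI * / sPI <= eps). 
  { unfold Rdiv. rewrite Rmult_assoc, <- Rinv_mult, H2. apply Rmult_le_reg_r with PI. lra. rewrite Rmult_assoc, Rinv_l by lra. nra. }
  replace (1/2 - A x / sPI) with ((sPI/2 - A y) * / sPI + (A y - A x) * / sPI) by (field; lra).
  assert (0 < / sPI) by (apply Rinv_0_lt_compat; lra).
  assert (X1 : (sPI/2 - A y) * / sPI <= 2 * exp (- y^2) / sPI * / sPI) by (apply Rmult_le_compat_r; lra).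
  assert (X2 : (A y - A x) * / sPI <= 4 / (1+x)^3 * / sPI) by (apply Rmult_le_compat_r; lra).
  lra.
Qed.

Lemma A_odd x : A (- x) = - A x.
Proof.
  assert (H := RInt_comp_linR E (-1) 0 0 x (E_ex _ _)).
  replace (-1*0+0) with 0 in H by ring. replace (-1*x+0) with (-x) in H by ring.
  unfold A. rewrite <- H.
  rewrite (RInt_extR _ (fun y => -1 * E y)). rewrite RInt_scalR by apply E_ex. ring.
  intros; unfold E. f_equal. f_equal. f_equal. ring.
Qed.

Definition p (y : R) := / ((1 + y^2) * sqrt (1 + y^2)).
Lemma p_even y : p (- y) = p y.
Proof. unfold p. replace ((-y)^2) with (y^2) by ring. reflexivity. Qed.
Lemma p_pos y : 0 < p y.
Proof. unfold p. apply Rinv_0_lt_compat. apply Rmult_lt_0_compat. nra. apply sqrt_lt_R0. nra. Qed.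
Lemma p_bound x : 0 <= x -> 4 / (1 + x)^3 <= 4 * p x.
Proof.
  intros. unfold p, Rdiv. apply Rmult_le_compat_l. lra.
  apply Rinv_le_contravar. apply Rmult_lt_0_compat. nra. apply sqrt_lt_R0. nra.
  assert (sqrt (1 + x^2) <= 1 + x).
  { rewrite <- (sqrt_pow2 (1+x)) by lra. apply sqrt_le_1_alt. nra. }
  assert (0 <= sqrt (1 + x^2)) by apply sqrt_pos.
  replace ((1+x)^3) with ((1+x)^2 * (1+x)) by ring.
  apply Rmult_le_compat; nra.
Qed.
Lemma Fn_pos y : 0 <= y -> Rabs (Fn y - 1/2) <= 4 * p y.
Proof. intros. assert (H1 := Fn_tail y H). assert (H2 := p_bound y H).
  rewrite Rabs_left1 by lra. lra. Qed.
Lemma Fn_neg y : y <= 0 -> Rabs (Fn y + 1/2) <= 4 * p y.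
Proof. intros. assert (H1 := Fn_tail (-y) ltac:(lra)). assert (H2 := p_bound (-y) ltac:(lra)).
  rewrite p_even in H2. unfold Fn in *. rewrite A_odd in H1.
  rewrite Rabs_right. replace (A y / sPI + 1/2) with (1/2 - - A y / sPI) by (unfold Rdiv; ring). lra.
  unfold Rdiv in *. lra. Qed.

Lemma RInt_E (p q : R) : @eq R (RInt E p q) (A q - A p).
Proof. unfold A. rewrite <- (RInt_ChaslesR E 0 p q) by apply E_ex. generalize (RInt E 0 p) (RInt E p q). intros u v. change R in u, v. ring. Qed.

Lemma h_eq t al be r : 0 < t -> h_t t al be r = Fn (t*(r-al)) - Fn (t*(r-be)).
Proof.
  intros Ht. unfold h_t, Fn. fold sPI. destruct sPI_facts as (H1&H2&H3).
  assert (Hex : ex_RInt (fun y => E (-t*y + t*r)) al be).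
  { apply exR_cont. intros. apply exd_cont. unfold E. auto_derive. auto. }
  assert (H := RInt_comp_linR E (-t) (t*r) al be (E_ex _ _)).
  rewrite RInt_scalR in H by exact Hex. rewrite RInt_E in H.
  rewrite (RInt_extR _ (fun y => E (-t*y + t*r))).
  replace (RInt (fun y => E (-t*y + t*r)) al be) with ((A (- t * be + t * r) - A (- t * al + t * r)) / (-t)).
  replace (- t * be + t * r) with (t*(r-be)) by ring. replace (- t * al + t * r) with (t*(r-al)) by ring.
  field. lra.
  rewrite <- H. field. lra.
  intros. unfold E. f_equal. f_equal. ring.
Qed.

Lemma abs_split x b : Rabs x <= b -> -b <= x <= b.
Proof. unfold Rabs; destruct Rcase_abs; intros; lra. Qed.
Lemma abs_join x b : -b <= x <= b -> Rabs x <= b.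
Proof. unfold Rabs; destruct Rcase_abs; intros; lra. Qed.

Lemma tanh_bound x : Rabs (tanhR x) <= 1.
Proof.
  unfold tanhR. assert (0 < exp x) by apply exp_pos. assert (0 < exp (-x)) by apply exp_pos.
  apply abs_join. split.
  apply Rmult_le_reg_r with (exp x + exp (-x)). lra. unfold Rdiv. rewrite Rmult_assoc, Rinv_l by lra. lra.
  apply Rmult_le_reg_r with (exp x + exp (-x)). lra. unfold Rdiv. rewrite Rmult_assoc, Rinv_l by lra. lra.
Qed.

Definition Pb t al be r := 4 * (p (t*(r-al)) + p (t*(r-be)) + p (t*(r-(-al))) + p (t*(r-(-be)))).

Lemma D_bound t al be r : 0 < t -> 0 <= al <= be -> 0 <= r ->
  Rabs (h_t t al be r + h_t t al be (-r) - ind_cc al be r) <= Pb t al be r.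
Proof.
  intros Ht Hab Hr. rewrite !h_eq by exact Ht. unfold Pb.
  assert (Y1 := Fn_neg (t*(-r-al)) ltac:(nra)). assert (Y2 := Fn_neg (t*(-r-be)) ltac:(nra)).
  replace (t*(-r-al)) with (- (t*(r-(-al)))) in Y1 by ring. replace (t*(-r-be)) with (- (t*(r-(-be)))) in Y2 by ring.
  rewrite p_even in Y1, Y2. replace (- (t*(r-(-al)))) with (t*(-r-al)) in Y1 by ring. replace (- (t*(r-(-be)))) with (t*(-r-be)) in Y2 by ring.
  apply abs_split in Y1. apply abs_split in Y2.
  apply abs_join.
  unfold ind_cc. destruct (Rle_dec al r) as [H1|H1]; [destruct (Rle_dec r be) as [H2|H2]|].
  - assert (X1 := Fn_pos (t*(r-al)) ltac:(nra)). assert (X2 := Fn_neg (t*(r-be)) ltac:(nra)).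
    apply abs_split in X1. apply abs_split in X2. lra.
  - assert (X1 := Fn_pos (t*(r-al)) ltac:(nra)). assert (X2 := Fn_pos (t*(r-be)) ltac:(nra)).
    apply abs_split in X1. apply abs_split in X2. lra.
  - assert (X1 := Fn_neg (t*(r-al)) ltac:(nra)). assert (X2 := Fn_neg (t*(r-be)) ltac:(nra)).
    apply abs_split in X1. apply abs_split in X2. lra.
Qed.

Lemma integrand_bound t a b r : 0 < t -> 0 <= spec_param a <= spec_param b -> 0 <= r ->
  Rabs (RI_integrand t a b r) <= r * Pb t (spec_param a) (spec_param b) r.
Proof.
  intros Ht Hab Hr. unfold RI_integrand. cbv zeta.
  rewrite !Rabs_mult. rewrite (Rabs_right r) by lra.
  assert (H1 := D_bound t _ _ r Ht Hab Hr). assert (H2 := tanh_bound (PI * r)).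
  assert (0 <= Rabs (tanhR (PI * r))) by apply Rabs_pos.
  assert (0 <= Rabs (h_t t (spec_param a) (spec_param b) r + h_t t (spec_param a) (spec_param b) (- r) -
    ind_cc (spec_param a) (spec_param b) r)) by apply Rabs_pos.
  revert H H0 H1 H2. generalize (Rabs (tanhR (PI * r))) (Rabs (h_t t (spec_param a) (spec_param b) r + h_t t (spec_param a) (spec_param b) (- r) -
    ind_cc (spec_param a) (spec_param b) r)) (Pb t (spec_param a) (spec_param b) r). intros u v w Hu Hv Hw Hu1.
  assert (v * r <= w * r) by (apply Rmult_le_compat_r; lra).
  assert (v * r * u <= v * r * 1) by (apply Rmult_le_compat_l; nra). nra.
Qed.

Definition Gc t c r := c / t * (t*(r-c) / sqrt (1 + (t*(r-c))^2)) - / t^2 * / sqrt (1 + (t*(r-c))^2).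

Lemma gc_der (t c r : R) : 0 < t -> is_derive (Gc t c) r (r * p (t*(r-c))).
Proof.
  intros Ht. unfold Gc, p. auto_derive.
  - replace (r + - c) with (r - c) by ring. set (y := t*(r-c)). replace (1 + y*(y*1)) with (1+y^2) by ring.
    assert (0 < sqrt (1+y^2)) by (apply sqrt_lt_R0; nra). repeat split; auto; nra.
  - replace (r + - c) with (r - c) by ring. 
    assert (Hy : r = c + (t*(r-c)) / t) by (field; lra).
    set (y := t*(r-c)) in *. replace (1 + y*(y*1)) with (1+y^2) by ring.
    assert (0 < sqrt (1+y^2)) by (apply sqrt_lt_R0; nra).
    assert (Hs : sqrt (1+y^2) * sqrt (1+y^2) = 1+y^2) by (apply sqrt_sqrt; nra).
    set (s := sqrt (1+y^2)) in *. rewrite Hy. rewrite <- Hs. field_simplify.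
    replace (s^2) with (1+y^2) by (rewrite <- Hs; ring). field. split; lra.
    split; lra. split; lra.
Qed.

Lemma sq_facts y : 0 < sqrt (1 + y^2) /\ sqrt (1+y^2) * sqrt (1+y^2) = 1 + y^2 /\ 1 <= sqrt (1+y^2) /\ Rabs y <= sqrt (1+y^2).
Proof.
  assert (H1 : 0 < sqrt (1+y^2)) by (apply sqrt_lt_R0; nra).
  assert (H2 : sqrt (1+y^2) * sqrt (1+y^2) = 1 + y^2) by (apply sqrt_sqrt; nra).
  split; auto. split; auto. split. nra.
  destruct (Rle_dec (Rabs y) (sqrt (1+y^2))); auto.
  assert (Rabs y * Rabs y = y^2). rewrite <- Rabs_mult. rewrite Rabs_right. ring. nra. nra.
Qed.

Lemma Gc_bound t c u v : 0 < t -> Gc t c v - Gc t c u <= 2 * Rabs c / t + / t^2.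
Proof.
  intros Ht. unfold Gc.
  destruct (sq_facts (t*(v-c))) as (A1&A2&A3&A4).
  destruct (sq_facts (t*(u-c))) as (B1&B2&B3&B4).
  set (sv := sqrt (1 + (t*(v-c))^2)) in *. set (su := sqrt (1 + (t*(u-c))^2)) in *.
  set (yv := t*(v-c)) in *. set (yu := t*(u-c)) in *.
  assert (Q1 : Rabs (yv / sv) <= 1).
  { unfold Rdiv. rewrite Rabs_mult, Rabs_inv, (Rabs_right sv) by lra. apply Rmult_le_reg_r with sv. lra. rewrite Rmult_assoc, Rinv_l by lra. lra. }
  assert (Q2 : Rabs (yu / su) <= 1).
  { unfold Rdiv. rewrite Rabs_mult, Rabs_inv, (Rabs_right su) by lra. apply Rmult_le_reg_r with su. lra. rewrite Rmult_assoc, Rinv_l by lra. lra. }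
  assert (I1 : 0 < / sv <= 1). split. apply Rinv_0_lt_compat; lra. rewrite <- Rinv_1. apply Rinv_le_contravar; lra.
  assert (I2 : 0 < / su <= 1). split. apply Rinv_0_lt_compat; lra. rewrite <- Rinv_1. apply Rinv_le_contravar; lra.
  assert (T2 : 0 < / t^2) by (apply Rinv_0_lt_compat; nra).
  assert (C1 : c / t * (yv / sv) - c / t * (yu / su) <= 2 * Rabs c / t).
  { replace (c / t * (yv / sv) - c / t * (yu / su)) with (c / t * (yv / sv - yu / su)) by ring.
    apply Rle_trans with (Rabs (c / t * (yv / sv - yu / su))). apply Rle_abs.
    rewrite Rabs_mult. unfold Rdiv at 1. rewrite Rabs_mult, Rabs_inv, (Rabs_right t) by lra.
    assert (Rabs (yv / sv - yu / su) <= 2). eapply Rle_trans. apply Rabs_triang. rewrite Rabs_Ropp. lra.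
    assert (0 <= Rabs c * / t). apply Rmult_le_pos. apply Rabs_pos. left; apply Rinv_0_lt_compat; lra.
    unfold Rdiv. nra. }
  assert (C2 : / t^2 * / su - / t^2 * / sv <= / t^2) by nra.
  lra.
Qed.

Lemma Q_tail y : 0 < y -> 0 <= 1 - y / sqrt (1+y^2) <= / y /\ / sqrt (1+y^2) <= / y.
Proof.
  intros Hy. destruct (sq_facts y) as (A1&A2&A3&A4). set (s := sqrt (1+y^2)) in *.
  rewrite Rabs_right in A4 by lra.
  assert (s > y). { destruct (Rle_dec s y); [|lra]. assert (s = y) by lra. nra. }
  split; [split|].
  - apply Rmult_le_reg_r with s. lra. unfold Rdiv. rewrite Rmult_0_l, Rmult_minus_distr_r, Rmult_assoc, Rinv_l by lra. lra.
  - apply Rmult_le_reg_r with (y*s). nra.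
    replace ((1 - y / s) * (y * s)) with (y*s - y*y) by (field; lra).
    replace (/ y * (y * s)) with s by (field; lra). nra.
  - apply Rinv_le_contravar; lra.
Qed.

Lemma Gc_tail t c u v : 0 < t -> c < u <= v ->
  Rabs (Gc t c v - Gc t c u) <= (2 * Rabs c / t + 2 / t^2) * / (t * (u - c)).
Proof.
  intros Ht Huv. unfold Gc.
  assert (Hyu : 0 < t*(u-c)) by nra. assert (Hyv : t*(u-c) <= t*(v-c)) by nra.
  destruct (Q_tail (t*(u-c)) Hyu) as [[U1 U2] U3].
  destruct (Q_tail (t*(v-c)) ltac:(lra)) as [[V1 V2] V3].
  destruct (sq_facts (t*(v-c))) as (A1&A2&A3&A4).
  destruct (sq_facts (t*(u-c))) as (B1&B2&B3&B4).
  set (sv := sqrt (1 + (t*(v-c))^2)) in *. set (su := sqrt (1 + (t*(u-c))^2)) in *.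
  set (yv := t*(v-c)) in *. set (yu := t*(u-c)) in *.
  assert (W : / yv <= / yu) by (apply Rinv_le_contravar; lra).
  assert (0 < / yu) by (apply Rinv_0_lt_compat; lra).
  assert (0 < / sv) by (apply Rinv_0_lt_compat; lra).
  assert (0 < / su) by (apply Rinv_0_lt_compat; lra).
  assert (T2 : 0 < / t^2) by (apply Rinv_0_lt_compat; nra).
  replace (c / t * (yv / sv) - / t ^ 2 * / sv - (c / t * (yu / su) - / t ^ 2 * / su))
    with (c / t * ((1 - yu / su) - (1 - yv/sv)) + / t^2 * (/ su - / sv)) by ring.
  eapply Rle_trans. apply Rabs_triang. rewrite !Rabs_mult.
  unfold Rdiv at 1. rewrite Rabs_mult, Rabs_inv, (Rabs_right t) by lra. rewrite (Rabs_right (/ t^2)) by lra.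
  assert (Rabs (1 - yu / su - (1 - yv / sv)) <= 2 * / yu) by (apply abs_join; lra).
  assert (Rabs (/ su - / sv) <= 2 * / yu) by (apply abs_join; lra).
  assert (0 <= Rabs c * / t). apply Rmult_le_pos. apply Rabs_pos. left; apply Rinv_0_lt_compat; lra.
  assert (Rabs c * / t * Rabs (1 - yu / su - (1 - yv / sv)) <= Rabs c * / t * (2 * / yu)) by (apply Rmult_le_compat_l; lra).
  assert (/ t^2 * Rabs (/ su - / sv) <= / t^2 * (2 * / yu)) by (apply Rmult_le_compat_l; lra).
  unfold Rdiv. lra.
Qed.

Lemma is_derive_plusR (f g : R -> R) x df dg : is_derive f x df -> is_derive g x dg -> is_derive (fun y => f y + g y) x (df + dg).
Proof. intros H1 H2. exact (is_derive_plus f g x df dg H1 H2). Qed.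

Lemma Fn_der y : ex_derive Fn y.
Proof. exists (/ sPI * E y). apply is_derive_ext with (fun y => / sPI * A y). intros; unfold Fn, Rdiv; match goal with |- ?a = ?b => change (@eq R a b) end; ring.
  apply is_derive_scal, A_der. Qed.

Definition hh t al be r := Fn (t*(r-al)) - Fn (t*(r-be)).
Definition fk t al be k r := (hh t al be r + hh t al be (-r) - k) * r * tanhR (PI * r).
Lemma fk_cont t al be k r : continuous (fk t al be k) r.
Proof.
  apply exd_cont. unfold fk, hh, tanhR. auto_derive. repeat split; try apply Fn_der.
  assert (0 < exp (PI * r)) by apply exp_pos. assert (0 < exp (- (PI * r))) by apply exp_pos. lra.
Qed.

Lemma f_out t a b x : 0 < t -> (x < spec_param a \/ spec_param b < x) -> spec_param a <= spec_param b ->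
  RI_integrand t a b x = fk t (spec_param a) (spec_param b) 0 x.
Proof.
  intros Ht Hx Hab. unfold RI_integrand, fk, hh. cbv zeta. rewrite !h_eq by exact Ht.
  unfold ind_cc. destruct (Rle_dec (spec_param a) x); [destruct (Rle_dec x (spec_param b))|]; try lra; reflexivity.
Qed.
Lemma f_in t a b x : 0 < t -> spec_param a <= x <= spec_param b ->
  RI_integrand t a b x = fk t (spec_param a) (spec_param b) 1 x.
Proof.
  intros Ht Hx. unfold RI_integrand, fk, hh. cbv zeta. rewrite !h_eq by exact Ht.
  unfold ind_cc. destruct (Rle_dec (spec_param a) x); [destruct (Rle_dec x (spec_param b))|]; try lra; reflexivity.
Qed.

Lemma f_ex0 t a b X : 0 < t -> 0 <= spec_param a <= spec_param b -> spec_param b <= X ->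
  ex_RInt (RI_integrand t a b) 0 X.
Proof.
  intros Ht Hab HX.
  apply ex_RInt_Chasles with (spec_param a).
  apply ex_RInt_ext with (fk t (spec_param a) (spec_param b) 0).
  intros x Hx. rewrite Rmin_left, Rmax_right in Hx by lra. symmetry; apply f_out; lra.
  apply exR_cont; intros; apply fk_cont.
  apply ex_RInt_Chasles with (spec_param b).
  apply ex_RInt_ext with (fk t (spec_param a) (spec_param b) 1).
  intros x Hx. rewrite Rmin_left, Rmax_right in Hx by lra. symmetry; apply f_in; lra.
  apply exR_cont; intros; apply fk_cont.
  apply ex_RInt_ext with (fk t (spec_param a) (spec_param b) 0).
  intros x Hx. rewrite Rmin_left, Rmax_right in Hx by lra. symmetry; apply f_out; lra.
  apply exR_cont; intros; apply fk_cont.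
Qed.

Lemma f_ex1 t a b u v : 0 < t -> 0 <= spec_param a <= spec_param b -> spec_param b < u -> spec_param b < v ->
  ex_RInt (RI_integrand t a b) u v.
Proof.
  intros Ht Hab Hu Hv.
  apply ex_RInt_ext with (fk t (spec_param a) (spec_param b) 0).
  intros x Hx. assert (Rmin u v > spec_param b) by (apply Rmin_glb_lt; lra). symmetry; apply f_out; lra.
  apply exR_cont; intros; apply fk_cont.
Qed.


Definition Gs t al be r := 4 * (Gc t al r + Gc t be r + Gc t (-al) r + Gc t (-be) r).
Lemma Gs_der t al be r : 0 < t -> is_derive (Gs t al be) r (r * Pb t al be r).
Proof.
  intros Ht. unfold Gs, Pb.
  replace (r * (4 * (p (t * (r - al)) + p (t * (r - be)) + p (t * (r - - al)) + p (t * (r - - be)))))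
    with (4 * (r * p (t * (r - al)) + r * p (t * (r - be)) + r * p (t * (r - - al)) + r * p (t * (r - - be)))) by ring.
  apply is_derive_scal.
  repeat apply is_derive_plusR; apply gc_der; exact Ht.
Qed.
Lemma aux_pos1 y : 0 < 1 + y * (y * 1).
Proof. nra. Qed.
Lemma aux_pos2 y : (1 + y * (y * 1)) * sqrt (1 + y * (y * 1)) <> 0.
Proof. apply Rgt_not_eq, Rmult_lt_0_compat. nra. apply sqrt_lt_R0; nra. Qed.
Lemma g_int t al be u v : 0 < t -> is_RInt (fun r => r * Pb t al be r) u v (Gs t al be v - Gs t al be u).
Proof.
  intros Ht. apply is_RInt_derR. intros; apply Gs_der; auto.
  intros. apply exd_cont. unfold Pb, p. auto_derive.
  repeat split; try apply aux_pos1; try apply aux_pos2.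
Qed.
Lemma Gs_bound t al be u v : 0 < t -> 0 <= al -> 0 <= be ->
  Gs t al be v - Gs t al be u <= 16 * (al + be) / t + 16 / t^2.
Proof.
  intros Ht Ha Hb. unfold Gs.
  assert (H1 := Gc_bound t al u v Ht). assert (H2 := Gc_bound t be u v Ht).
  assert (H3 := Gc_bound t (-al) u v Ht). assert (H4 := Gc_bound t (-be) u v Ht).
  rewrite Rabs_Ropp in H3, H4. rewrite Rabs_right in H1, H2, H3, H4 by lra.
  unfold Rdiv in *. lra.
Qed.
Lemma Gs_tail t al be u v : 0 < t -> 0 <= al <= be -> be < u <= v ->
  Rabs (Gs t al be v - Gs t al be u) <= 16 * (2 * be / t + 2 / t^2) * / (t * (u - be)).
Proof.
  intros Ht Hab Huv. unfold Gs.
  assert (K : forall c, -be <= c <= be -> Rabs (Gc t c v - Gc t c u) <= (2 * be / t + 2 / t^2) * / (t * (u - be))).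
  { intros c Hc. eapply Rle_trans. apply Gc_tail. auto. lra.
    assert (Rabs c <= be) by (apply abs_join; lra).
    apply Rmult_le_compat. 
    assert (0 < / t) by (apply Rinv_0_lt_compat; lra). assert (0 <= / t^2) by (left; apply Rinv_0_lt_compat; nra).
    unfold Rdiv. assert (0 <= Rabs c) by apply Rabs_pos. nra.
    left; apply Rinv_0_lt_compat; nra.
    unfold Rdiv. assert (0 < / t) by (apply Rinv_0_lt_compat; lra). assert (Rabs c * / t <= be * / t) by (apply Rmult_le_compat_r; lra). lra.
    apply Rinv_le_contravar; nra. }
  assert (H1 := K al ltac:(lra)). assert (H2 := K be ltac:(lra)). assert (H3 := K (-al) ltac:(lra)). assert (H4 := K (-be) ltac:(lra)).
  apply abs_split in H1. apply abs_split in H2. apply abs_split in H3. apply abs_split in H4.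
  apply abs_join. lra.
Qed.

Lemma f_RInt_bound t a b u v : 0 < t -> 0 <= spec_param a <= spec_param b -> 0 <= u <= v ->
  ex_RInt (RI_integrand t a b) u v ->
  Rabs (RInt (RI_integrand t a b) u v) <= Gs t (spec_param a) (spec_param b) v - Gs t (spec_param a) (spec_param b) u.
Proof.
  intros Ht Hab Huv Hex.
  assert (Hg := g_int t (spec_param a) (spec_param b) u v Ht).
  assert (Hge : ex_RInt (fun r => r * Pb t (spec_param a) (spec_param b) r) u v) by (eexists; exact Hg).
  apply is_RInt_uniqueR in Hg.
  apply abs_join. split.
  - rewrite <- Hg. rewrite <- RInt_oppR by exact Hge.
    apply RInt_le. lra. apply (ex_RInt_opp (V:=R_NormedModule)) in Hge. exact Hge. exact Hex.
    intros x Hx. assert (H := integrand_bound t a b x Ht Hab ltac:(lra)). apply abs_split in H. lra.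
  - rewrite <- Hg. apply RInt_le. lra. exact Hex. exact Hge.
    intros x Hx. assert (H := integrand_bound t a b x Ht Hab ltac:(lra)). apply abs_split in H. lra.
Qed.

Theorem proposition4p2 :
  exists C : R, forall a b t : R,
    / 4 <= a -> a <= b -> / 10 <= t ->
    ex_RInt_gen (RI_integrand t a b) (at_point 0) (Rbar_locally p_infty) /\
    Rabs (R_I t a b) <= C * sqrt b / t.
Proof.
  exists 64. intros a b t Ha Hab Ht.
  assert (Ht0 : 0 < t) by lra.
  assert (Hal : 0 <= spec_param a) by apply sqrt_pos.
  assert (Hbe : spec_param a <= spec_param b) by (apply sqrt_le_1_alt; lra).
  assert (Hbs : spec_param b <= sqrt b) by (apply sqrt_le_1_alt; lra).
  assert (Hsb : 1/2 <= sqrt b).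
  { assert (sqrt b * sqrt b = b) by (apply sqrt_sqrt; lra). assert (0 <= sqrt b) by apply sqrt_pos. nra. }
  set (f := RI_integrand t a b).
  set (I := fun X => RInt f 0 X).
  set (B := 16 * ((spec_param a) + (spec_param b)) / t + 16 / t^2).
  assert (HIb : forall X, (spec_param b) <= X -> Rabs (I X) <= B).
  { intros X HX. eapply Rle_trans. apply f_RInt_bound; [exact Ht0 | lra | lra | apply f_ex0; auto; lra].
    apply Gs_bound; lra. }
  assert (Hcv : exists l, filterlim I (Rbar_locally p_infty) (locally l)).
  { apply (filterlim_locally_cauchy (U:=R_CompleteSpace) (F := Rbar_locally p_infty)).
    intros eps.
    set (K := 16 * (2 * (spec_param b) / t + 2 / t^2) * / t).
    assert (HK : 0 <= K). unfold K. assert (0 < / t) by (apply Rinv_0_lt_compat; lra). assert (0 < / t^2) by (apply Rinv_0_lt_compat; nra). unfold Rdiv. nra.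
    assert (Heps := cond_pos eps).
    exists (fun x => (spec_param b) + 1 + K / eps < x). split.
    exists ((spec_param b) + 1 + K / eps). auto.
    assert (KE : 0 <= K / eps) by (unfold Rdiv; apply Rmult_le_pos; [lra| left; apply Rinv_0_lt_compat; lra]).
    assert (Main : forall u v, (spec_param b) + 1 + K / eps < u -> u <= v -> Rabs (I v - I u) < eps).
    { intros u v Hu Huv. unfold I.
      assert (Hc := RInt_ChaslesR f 0 u v ltac:(apply f_ex0; auto; lra) ltac:(apply f_ex1; auto; lra)).
      assert (Ec : RInt f 0 v - RInt f 0 u = RInt f u v).
      { rewrite <- Hc. generalize (RInt f 0 u) (RInt f u v); intros x y; change R in x, y; ring. }
      rewrite Ec.
      eapply Rle_lt_trans. apply f_RInt_bound; auto. lra. apply f_ex1; auto; lra.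
      eapply Rle_lt_trans. apply Rle_abs. eapply Rle_lt_trans. apply Gs_tail; auto. lra.
      replace (16 * (2 * (spec_param b) / t + 2 / t ^ 2) * / (t * (u - (spec_param b)))) with (K / (u - (spec_param b))) by (unfold K; field; lra).
      apply Rmult_lt_reg_r with (u - (spec_param b)). lra. unfold Rdiv. rewrite Rmult_assoc, Rinv_l by lra.
      assert (eps * (K / eps) = K) by (field; lra). nra. }
    intros u v Hu Hv.
    change (Rabs (I v - I u) < eps).
    destruct (Rle_dec u v). apply Main; auto.
    rewrite Rabs_minus_sym. apply Main; auto; lra. }
  destruct Hcv as [l Hl].
  assert (Hgen : is_RInt_gen f (at_point 0) (Rbar_locally p_infty) l).
  { unfold is_RInt_gen.
    apply filterlimi_lim_ext_loc with (f := fun ab => RInt f (fst ab) (snd ab)).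
    apply Filter_prod with (fun x => x = 0) (fun y => (spec_param b) < y). reflexivity. exists (spec_param b). auto.
    intros x y Hx Hy. simpl. subst x. apply (RInt_correct (V:=R_CompleteNormedModule)). apply f_ex0; auto; lra.
    apply filterlim_ext_loc with (fun ab => I (snd ab)).
    apply Filter_prod with (fun x => x = 0) (fun y => True). reflexivity. exists 0. auto.
    intros x y Hx _. simpl. subst x. reflexivity.
    eapply filterlim_comp. apply filterlim_snd. exact Hl. }
  split. exists l. exact Hgen.
  assert (Hlb : Rabs l <= B).
  { apply abs_join. split.
    - assert (H := filterlim_le (F := Rbar_locally p_infty) (fun _ => - B) I (- B) l).
      simpl in H. apply H.
      exists (spec_param b). intros X HX. assert (H2 := HIb X ltac:(lra)). apply abs_split in H2. lra.
      apply filterlim_const. exact Hl.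
    - assert (H := filterlim_le (F := Rbar_locally p_infty) I (fun _ => B) l B).
      simpl in H. apply H.
      exists (spec_param b). intros X HX. assert (H2 := HIb X ltac:(lra)). apply abs_split in H2. lra.
      exact Hl. apply filterlim_const. }
  unfold R_I. fold f. rewrite (is_RInt_gen_unique (V:=R_CompleteNormedModule) f l Hgen).
  change R in l.
  rewrite Rabs_mult, Rabs_right by (left; apply Rinv_0_lt_compat; assert (H := PI2_1); lra).
  assert (HPI := PI2_1).
  assert (Hi : 0 < / (4 * PI) <= / 8).
  { split. apply Rinv_0_lt_compat; lra. apply Rinv_le_contravar; lra. }
  assert (Hit : 0 < / t <= 10).
  { split. apply Rinv_0_lt_compat; lra. replace 10 with (/ / 10) by (field). apply Rinv_le_contravar; lra. }
  assert (HB : B <= 352 * sqrt b * / t).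
  { unfold B. unfold Rdiv. replace (16 * / t ^ 2) with (16 * / t * / t) by (field; lra).
    assert (16 * (spec_param a + spec_param b) * / t <= 32 * sqrt b * / t) by (apply Rmult_le_compat_r; lra).
    assert (16 * / t * / t <= 160 * / t) by nra.
    nra. }
  assert (0 <= Rabs l) by apply Rabs_pos.
  assert (/ (4 * PI) * Rabs l <= / 8 * B) by (apply Rmult_le_compat; lra).
  unfold Rdiv. nra.
Qed.
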